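(* Let $p\in(0,1)$ and let $N_j$ be the counting processes of Simon's model with parameter $p$. For every $\gamma\in(1,1/p)$ there exist constants $c=c(\gamma,p)>0$ and $\eta=\eta(\gamma,p)\in(0,1)$ such that $$\mathbb E\big[N_j(n)^\gamma\big]\le c\,(n/j)^\eta\qquad\text{for all integers }1\le j\le n.$$
   Context: Simon's model with parameter $p$: let $\varepsilon_1=0$ and let $(\varepsilon_i)_{i\ge2}$ be i.i.d. Bernoulli($p$) variables. Define indices $\pi(i)$ recursively: $\pi(1)=1$; for $i\ge2$, $\pi(i)=i$ if $\varepsilon_i=0$, and if $\varepsilon_i=1$, $\pi(i)=\pi(U_i)$ where $U_i$ is uniform on $\{1,\dots,i-1\}$, independent of everything else. The counting processes are $N_j(k)=\#\{1\le\ell\le k:\pi(\ell)=j\}$ for integers $j,k\ge1$. *)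

(* Defs.v *)
From Stdlib Require Import Reals List Arith.
Import ListNotations.
Open Scope R_scope.

(* Simon's model, exact finite law of (pi(1),...,pi(k)).
   A state is a list s with s = [pi(1); ...; pi(k)] (so nth (i-1) s = pi(i)).
   The law after k steps is a finite list of (probability weight, state).
   Step to index i = k+1 (>= 2): with prob. (1-p) (eps_i = 0) pi(i) = i;
   with prob. p * 1/(i-1) for each u in {1,...,i-1} (eps_i = 1, U_i = u)
   pi(i) = pi(u). *)
Definition simon_step (p : R) (d : list (R * list nat)) : list (R * list nat) :=
  flat_map (fun ws : R * list nat =>
    let (w, s) := ws in
    let i := S (length s) in
    (w * (1 - p), s ++ [i])
      :: map (fun u => (w * (p / INR (length s)), s ++ [nth (u - 1) s 0%nat]))
             (seq 1 (length s)))
  d.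

Definition simon_law (p : R) (n : nat) : list (R * list nat) :=
  Nat.iter (n - 1) (simon_step p) [(1, [1%nat])].

Definition Ncount (j : nat) (s : list nat) : nat := count_occ Nat.eq_dec s j.

(* x^g for x >= 0 with the convention 0^g = 0 (g > 0). *)
Definition rpow (x g : R) : R := if Rle_dec x 0 then 0 else Rpower x g.

Definition expect_Npow (p : R) (n j : nat) (gamma : R) : R :=
  fold_right (fun ws acc => fst ws * rpow (INR (Ncount j (snd ws))) gamma + acc)
             0 (simon_law p n).

(* Main.v *)
Require Import Defs.
From Stdlib Require Import Reals List Arith Lia Lra.
Import ListNotations.
Open Scope R_scope.

Lemma exp_le' x y : x <= y -> exp x <= exp y.
Proof. intros [H|H]; [left; apply exp_increasing; auto | subst; lra]. Qed.

Lemma ln_le' x y : 0 < x -> x <= y -> ln x <= ln y.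
Proof. intros Hx [H|H]; [left; apply ln_increasing; auto | subst; lra]. Qed.

Definition Gh (h : nat -> R) (j : nat) (d : list (R * list nat)) : R :=
  fold_right (fun ws acc => fst ws * h (Ncount j (snd ws)) + acc) 0 d.

Lemma Gh_app h j l1 l2 : Gh h j (l1 ++ l2) = Gh h j l1 + Gh h j l2.
Proof. induction l1 as [|x l IH]; simpl; [lra|]. unfold Gh in *; simpl; rewrite IH; lra. Qed.

Lemma Gh_flat_map h j (f : R * list nat -> list (R * list nat)) d :
  Gh h j (flat_map f d) = fold_right (fun ws acc => Gh h j (f ws) + acc) 0 d.
Proof. induction d as [|x l IH]; simpl; [reflexivity|]. rewrite Gh_app, IH; reflexivity. Qed.

Lemma fold_le {A} (F H : A -> R) l :
  (forall x, In x l -> F x <= H x) ->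
  fold_right (fun x acc => F x + acc) 0 l <= fold_right (fun x acc => H x + acc) 0 l.
Proof.
  induction l as [|x l IH]; simpl; intros Hl; [lra|].
  apply Rplus_le_compat; auto.
Qed.

Lemma fold_ext {A} (F H : A -> R) l :
  (forall x, F x = H x) ->
  fold_right (fun x acc => F x + acc) 0 l = fold_right (fun x acc => H x + acc) 0 l.
Proof. intros E; induction l as [|x l IH]; simpl; [reflexivity|]. rewrite E, IH; reflexivity. Qed.

Lemma fold_scal {A} (c : R) (F : A -> R) l :
  fold_right (fun x acc => c * F x + acc) 0 l = c * fold_right (fun x acc => F x + acc) 0 l.
Proof. induction l as [|x l IH]; simpl; [lra|]. rewrite IH; lra. Qed.

Lemma fold_map {A B} (F : B -> R) (g : A -> B) l :
  fold_right (fun x acc => F x + acc) 0 (map g l) = fold_right (fun u acc => F (g u) + acc) 0 l.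
Proof. induction l as [|x l IH]; simpl; [reflexivity|]. rewrite IH; reflexivity. Qed.

Lemma map_nth_seq0 (s : list nat) :
  map (fun i => nth i s 0%nat) (seq 0 (length s)) = s.
Proof.
  induction s as [|x s IH]; simpl; [reflexivity|]. f_equal.
  rewrite <- seq_shift, map_map. simpl. exact IH.
Qed.

Lemma fold_seq_nth (F : nat -> R) s :
  fold_right (fun u acc => F (nth (u - 1) s 0%nat) + acc) 0 (seq 1 (length s))
  = fold_right (fun x acc => F x + acc) 0 s.
Proof.
  rewrite <- seq_shift, fold_map.
  transitivity (fold_right (fun x acc => F x + acc) 0 (map (fun i => nth i s 0%nat) (seq 0 (length s)))); [| rewrite map_nth_seq0; reflexivity]. rewrite fold_map.
  apply fold_ext. intros x. simpl. rewrite Nat.sub_0_r. reflexivity.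
Qed.

Lemma fold_ind j (A B : R) s :
  fold_right (fun x acc => (if Nat.eq_dec x j then A else B) + acc) 0 s
  = INR (count_occ Nat.eq_dec s j) * A + (INR (length s) - INR (count_occ Nat.eq_dec s j)) * B.
Proof.
  induction s as [|x s IH]; [simpl; lra|]. cbn [fold_right count_occ]. rewrite IH.
  change (length (x :: s)) with (S (length s)); destruct (Nat.eq_dec x j); rewrite ?S_INR; lra.
Qed.

Lemma Ncount_snoc j s x :
  Ncount j (s ++ [x]) = (Ncount j s + (if Nat.eq_dec x j then 1 else 0))%nat.
Proof. unfold Ncount. rewrite count_occ_app. simpl. destruct (Nat.eq_dec x j); reflexivity. Qed.

Definition stepf (p : R) (ws : R * list nat) : list (R * list nat) :=
    let (w, s) := ws in
    let i := S (length s) in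
    (w * (1 - p), s ++ [i])
      :: map (fun u => (w * (p / INR (length s)), s ++ [nth (u - 1) s 0%nat]))
             (seq 1 (length s)).

Lemma step_eq p d : simon_step p d = flat_map (stepf p) d.
Proof. reflexivity. Qed.

Lemma child_eq h j p w s :
  Gh h j (stepf p (w, s)) =
  w * (1 - p) * h (Ncount j s + (if Nat.eq_dec (S (length s)) j then 1 else 0))%nat
  + INR (Ncount j s) * (w * (p / INR (length s)) * h (S (Ncount j s)))
  + (INR (length s) - INR (Ncount j s)) * (w * (p / INR (length s)) * h (Ncount j s)).
Proof.
  unfold stepf. unfold Gh at 1. simpl fold_right. rewrite Ncount_snoc.
  change (fold_right (fun ws acc => fst ws * h (Ncount j (snd ws)) + acc) 0 ?l) with (Gh h j l).
  unfold Gh. rewrite fold_map. simpl.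
  rewrite (fold_seq_nth (fun x => w * (p / INR (length s)) * h (Ncount j (s ++ [x])))).
  rewrite (fold_ext _ (fun x => if Nat.eq_dec x j then w * (p / INR (length s)) * h (S (Ncount j s))
     else w * (p / INR (length s)) * h (Ncount j s))).
  - rewrite fold_ind. unfold Ncount. lra.
  - intros x. rewrite Ncount_snoc. destruct (Nat.eq_dec x j).
    + rewrite Nat.add_1_r; reflexivity.
    + rewrite Nat.add_0_r; reflexivity.
Qed.

Definition Inv (K : nat) (d : list (R * list nat)) : Prop :=
  forall ws, In ws d -> 0 <= fst ws /\ length (snd ws) = K /\
     (forall x, In x (snd ws) -> (x <= K)%nat).

Lemma step_inv p K d : 0 <= p <= 1 -> (1 <= K)%nat -> Inv K d -> Inv (S K) (simon_step p d).
Proof.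
  intros Hp HK HI ws Hws. rewrite step_eq in Hws.
  apply in_flat_map in Hws as [[w s] [Hin Hy]].
  destruct (HI _ Hin) as [Hw [Hl Hx]]; simpl in Hw, Hl, Hx.
  assert (HKpos : 0 < INR K) by (apply lt_0_INR; lia).
  simpl in Hy. destruct Hy as [<-|Hy].
  - simpl. split; [apply Rmult_le_pos; lra|]. split.
    + rewrite length_app; simpl; lia.
    + intros x Hx'. apply in_app_or in Hx' as [Hx'|Hx']; [apply Hx in Hx'; lia|].
      simpl in Hx'. destruct Hx' as [<-|[]]; lia.
  - apply in_map_iff in Hy as [u [<- Hu]]. apply in_seq in Hu. simpl. rewrite Hl.
    split; [apply Rmult_le_pos; [lra| unfold Rdiv; apply Rmult_le_pos; [lra| left; apply Rinv_0_lt_compat; lra]]|].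
    split.
    + rewrite length_app; simpl; lia.
    + intros x Hx'. apply in_app_or in Hx' as [Hx'|Hx']; [apply Hx in Hx'; lia|].
      simpl in Hx'. destruct Hx' as [<-|[]].
      assert (Hn : In (nth (u - 1) s 0%nat) s) by (apply nth_In; lia).
      apply Hx in Hn; lia.
Qed.

Lemma step_bound h h' j p r d :
  (forall w s, In (w, s) d -> Gh h j (stepf p (w, s)) <= r * (w * h' (Ncount j s))) ->
  Gh h j (simon_step p d) <= r * Gh h' j d.
Proof.
  intros H. rewrite step_eq, Gh_flat_map. unfold Gh at 2. rewrite <- fold_scal.
  apply fold_le. intros [w s] Hin. apply H; auto.
Qed.

Lemma fold_ext_in {A} (F H : A -> R) l :
  (forall x, In x l -> F x = H x) ->
  fold_right (fun x acc => F x + acc) 0 l = fold_right (fun x acc => H x + acc) 0 l.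
Proof. induction l as [|x l IH]; simpl; intros E; [reflexivity|]. rewrite E, IH; auto. Qed.

Definition one (_ : nat) : R := 1.

Lemma step_W p K d : (1 <= K)%nat -> Inv K d ->
  Gh one 0 (simon_step p d) = Gh one 0 d.
Proof.
  intros HK HI. rewrite step_eq, Gh_flat_map. unfold Gh at 2.
  apply fold_ext_in. intros [w s] Hin.
  destruct (HI _ Hin) as [Hw [Hl Hx]]; simpl in Hw, Hl, Hx.
  assert (HKpos : 0 < INR K) by (apply lt_0_INR; lia).
  rewrite child_eq. unfold one. rewrite Hl. simpl. field. lra.
Qed.

Definition eta (p g : R) := (p * g + 1) / 2.
Definition rr (p g : R) := eta p g / (p * g).
Definition aa (p g : R) := g / ln (rr p g).
Definition phi (p g : R) (N : nat) := Rpower (INR N + aa p g) g.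
Definition BB (p g : R) := Rpower (1 + aa p g) g.

Section S.
Variables p g : R.
Hypothesis hp : 0 < p < 1.
Hypothesis hg1 : 1 < g.
Hypothesis hpg : p * g < 1.

Lemma pg_pos : 0 < p * g.
Proof. apply Rmult_lt_0_compat; lra. Qed.

Lemma eta_bounds : 0 < eta p g < 1.
Proof. unfold eta; pose proof pg_pos; lra. Qed.

Lemma rr_gt1 : 1 < rr p g.
Proof.
  unfold rr, eta. pose proof pg_pos. apply Rmult_lt_reg_r with (p * g); auto.
  unfold Rdiv. rewrite Rmult_assoc, Rinv_l; lra.
Qed.

Lemma ln_rr_pos : 0 < ln (rr p g).
Proof. rewrite <- ln_1. apply ln_increasing; [lra| apply rr_gt1]. Qed.

Lemma aa_pos : 0 < aa p g.
Proof. unfold aa. pose proof ln_rr_pos. unfold Rdiv. apply Rmult_lt_0_compat; [lra|]. apply Rinv_0_lt_compat; auto. Qed.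

Lemma exp_g_a : exp (g / aa p g) = rr p g.
Proof.
  unfold aa. pose proof ln_rr_pos. replace (g / (g / ln (rr p g))) with (ln (rr p g)).
  - apply exp_ln. pose proof rr_gt1; lra.
  - field. split; lra.
Qed.

Lemma key (N : nat) : p * INR N * (phi p g (S N) - phi p g N) <= eta p g * phi p g N.
Proof.
  pose proof aa_pos as Ha. pose proof (pos_INR N) as HN.
  set (y := INR N + aa p g).
  assert (Hy : 0 < y) by (unfold y; lra).
  assert (Hya : aa p g <= y) by (unfold y; lra).
  unfold phi. rewrite S_INR.
  replace (INR N + 1 + aa p g) with (y + 1) by (unfold y; ring). fold y.
  unfold Rpower.
  set (D := ln (y + 1) - ln y).
  assert (HeD : exp D = 1 + 1 / y).
  { unfold D, Rminus. rewrite exp_plus, exp_Ropp, !exp_ln by lra. field. lra. }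
  assert (HD0 : 0 <= D) by (unfold D; pose proof (ln_le' y (y+1) Hy ltac:(lra)); lra).
  assert (HD1 : D <= 1 / y) by (pose proof (exp_ineq1_le D); lra).
  set (u := exp (g * ln y)). set (v := exp (g * ln (y + 1))).
  assert (Hu : 0 < u) by apply exp_pos.
  assert (Hv : 0 < v) by apply exp_pos.
  assert (Huv : u = v * exp (- (g * D))).
  { unfold u, v, D. rewrite <- exp_plus. f_equal. ring. }
  assert (Hvu : v = u * exp (g * D)).
  { unfold u, v, D. rewrite <- exp_plus. f_equal. ring. }
  assert (H1 : v - u <= v * (g * D)).
  { rewrite Huv. pose proof (exp_ineq1_le (- (g * D))). nra. }
  assert (H2 : v <= u * rr p g).
  { rewrite <- exp_g_a. rewrite Hvu at 1. apply Rmult_le_compat_l; [lra|].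
    apply exp_le'. unfold Rdiv. apply Rmult_le_compat_l; [lra|].
    apply Rle_trans with (1 / y); [lra|]. unfold Rdiv. rewrite Rmult_1_l.
    apply Rinv_le_contravar; auto. }
  assert (H3 : INR N * (v - u) <= g * v).
  { apply Rle_trans with (INR N * (v * (g * D))).
    - apply Rmult_le_compat_l; auto.
    - apply Rle_trans with (y * (v * (g * D))).
      + apply Rmult_le_compat_r; [|unfold y; lra]. apply Rmult_le_pos; [lra|]. apply Rmult_le_pos; lra.
      + assert (y * D <= 1) by (apply Rmult_le_reg_l with (/ y); [apply Rinv_0_lt_compat; auto|];
           rewrite <- Rmult_assoc, Rinv_l, Rmult_1_l by lra; unfold Rdiv in HD1; lra).
        replace (y * (v * (g * D))) with ((g * v) * (y * D)) by ring.
        rewrite <- (Rmult_1_r (g * v)) at 2. apply Rmult_le_compat_l; [|lra].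
        apply Rmult_le_pos; lra. }
  assert (Heta : eta p g = p * g * rr p g).
  { unfold rr. field. pose proof pg_pos; lra. }
  rewrite Heta.
  apply Rle_trans with (p * (g * v)).
  - rewrite Rmult_assoc. apply Rmult_le_compat_l; lra.
  - apply Rle_trans with (p * (g * (u * rr p g))).
    + apply Rmult_le_compat_l; [lra|]. apply Rmult_le_compat_l; lra.
    + right; ring.
Qed.


Definition law (m : nat) := Nat.iter m (simon_step p) [(1, [1%nat])].

Lemma law_inv m : Inv (S m) (law m) /\ Gh one 0 (law m) = 1.
Proof.
  induction m as [|m [HI HW]].
  - split.
    + intros ws [<-|[]]. simpl. split; [lra|]. split; [reflexivity|].
      intros x [<-|[]]; lia.
    + unfold Gh, one; simpl; ring.
  - change (law (S m)) with (simon_step p (law m)). split.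
    + apply step_inv; [lra|lia|exact HI].
    + rewrite (step_W p (S m)); [exact HW|lia|exact HI].
Qed.

Lemma phi_pos N : 0 < phi p g N.
Proof. unfold phi, Rpower. apply exp_pos. Qed.

Lemma BB_pos : 0 < BB p g.
Proof. unfold BB, Rpower. apply exp_pos. Qed.

Lemma phi_le_B N : (N <= 1)%nat -> phi p g N <= BB p g.
Proof.
  intros HN. unfold phi, BB. apply Rle_Rpower_l; [lra|].
  pose proof aa_pos. pose proof (pos_INR N). split; [lra|].
  apply le_INR in HN. simpl in HN. lra.
Qed.

Lemma below j m : (S m <= j)%nat -> Gh (phi p g) j (law m) <= BB p g.
Proof.
  induction m as [|m IH]; intros Hm.
  - unfold law; simpl. unfold Gh; simpl. rewrite Rmult_1_l, Rplus_0_r.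
    apply phi_le_B. unfold Ncount. apply (count_occ_bound Nat.eq_dec j [1%nat]).
  - change (law (S m)) with (simon_step p (law m)).
    destruct (law_inv m) as [HI HW].
    apply Rle_trans with (BB p g * Gh one j (law m)).
    + apply step_bound. intros w s Hin.
      destruct (HI _ Hin) as [Hw [Hl Hx]]; simpl in Hw, Hl, Hx.
      assert (HN : Ncount j s = 0%nat).
      { unfold Ncount. apply count_occ_not_In. intro H. apply Hx in H. lia. }
      rewrite child_eq, HN, Hl. unfold one.
      assert (HK : 0 < INR (S m)) by (apply lt_0_INR; lia).
      assert (H1 : phi p g (0 + (if Nat.eq_dec (S (S m)) j then 1 else 0)) <= BB p g).
      { apply phi_le_B. destruct (Nat.eq_dec (S (S m)) j); lia. }
      assert (H0 : phi p g 0 <= BB p g) by (apply phi_le_B; lia).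
      change (INR 0) with 0.
      replace ((INR (S m) - 0) * (w * (p / INR (S m)) * phi p g 0)) with (w * p * phi p g 0)
        by (field; lra).
      rewrite Rmult_0_l, Rplus_0_r.
      assert (w * (1 - p) * phi p g (0 + (if Nat.eq_dec (S (S m)) j then 1 else 0)) <= w * (1 - p) * BB p g)
        by (apply Rmult_le_compat_l; [apply Rmult_le_pos; lra | exact H1]).
      assert (w * p * phi p g 0 <= w * p * BB p g)
        by (apply Rmult_le_compat_l; [apply Rmult_le_pos; lra | exact H0]).
      nra.
    + change (Gh one j (law m)) with (Gh one 0 (law m)). rewrite HW. lra.
Qed.

Lemma above j m : (j <= S m)%nat ->
  Gh (phi p g) j (law (S m)) <= (1 + eta p g / INR (S m)) * Gh (phi p g) j (law m).
Proof.
  intros Hj. change (law (S m)) with (simon_step p (law m)).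
  destruct (law_inv m) as [HI HW].
  apply step_bound. intros w s Hin.
  destruct (HI _ Hin) as [Hw [Hl Hx]]; simpl in Hw, Hl, Hx.
  rewrite child_eq, Hl.
  destruct (Nat.eq_dec (S (S m)) j) as [e|_]; [lia|]. rewrite Nat.add_0_r.
  assert (HK : 0 < INR (S m)) by (apply lt_0_INR; lia).
  set (N := Ncount j s).
  pose proof (key N) as Hk.
  set (f0 := phi p g N) in *. set (f1 := phi p g (S N)) in *.
  replace (w * (1 - p) * f0 + INR N * (w * (p / INR (S m)) * f1) +
     (INR (S m) - INR N) * (w * (p / INR (S m)) * f0))
    with (w * f0 + (w / INR (S m)) * (p * INR N * (f1 - f0))) by (field; lra).
  replace ((1 + eta p g / INR (S m)) * (w * f0)) with (w * f0 + (w / INR (S m)) * (eta p g * f0))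
    by (field; lra).
  apply Rplus_le_compat_l. apply Rmult_le_compat_l; [|exact Hk].
  unfold Rdiv. apply Rmult_le_pos; [lra|]. left; apply Rinv_0_lt_compat; lra.
Qed.

Lemma grow (x e c : R) : 1 <= x -> 0 <= e ->
  (1 + e / (x + 1)) * exp (e * (ln x - c)) <= exp (e * (ln (x + 1) - c)).
Proof.
  intros Hx He.
  set (E := ln (x + 1) - ln x).
  assert (HeE : exp (- E) = x / (x + 1)).
  { unfold E. replace (- (ln (x + 1) - ln x)) with (ln x + - ln (x + 1)) by ring.
    rewrite exp_plus, exp_Ropp, !exp_ln by lra. field. lra. }
  assert (HE : 1 / (x + 1) <= E).
  { pose proof (exp_ineq1_le (- E)). rewrite HeE in H.
    assert (x / (x + 1) = 1 - 1 / (x + 1)) by (field; lra). lra. }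
  replace (e * (ln (x + 1) - c)) with (e * (ln x - c) + e * E) by (unfold E; ring).
  rewrite exp_plus. rewrite Rmult_comm. apply Rmult_le_compat_l; [left; apply exp_pos|].
  apply Rle_trans with (1 + e * E); [|apply exp_ineq1_le].
  unfold Rdiv. rewrite <- (Rmult_1_l (/ (x + 1))). fold (1 / (x + 1)).
  apply Rplus_le_compat_l. apply Rmult_le_compat_l; lra.
Qed.

Lemma chain j' t :
  Gh (phi p g) (S j') (law (S j' + t)) <=
  BB p g * (1 + eta p g / INR (S j')) * exp (eta p g * (ln (INR (S j' + t)) - ln (INR (S j')))).
Proof.
  pose proof eta_bounds as He.
  assert (Hj : 0 < INR (S j')) by (apply lt_0_INR; lia).
  induction t as [|t IH].
  - rewrite Nat.add_0_r. rewrite Rminus_diag, Rmult_0_r, exp_0, Rmult_1_r.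
    apply Rle_trans with ((1 + eta p g / INR (S j')) * Gh (phi p g) (S j') (law j')).
    + apply above; lia.
    + rewrite (Rmult_comm (BB p g)). apply Rmult_le_compat_l.
      * assert (0 <= eta p g / INR (S j')) by (unfold Rdiv; apply Rmult_le_pos; [lra|left; apply Rinv_0_lt_compat; lra]). lra.
      * apply below; lia.
  - rewrite Nat.add_succ_r.
    apply Rle_trans with ((1 + eta p g / INR (S (S j' + t))) * Gh (phi p g) (S j') (law (S j' + t))).
    + apply above; lia.
    + assert (0 <= eta p g / INR (S (S j' + t))).
      { unfold Rdiv; apply Rmult_le_pos; [lra|left; apply Rinv_0_lt_compat; apply lt_0_INR; lia]. }
      apply Rle_trans with ((1 + eta p g / INR (S (S j' + t))) *
         (BB p g * (1 + eta p g / INR (S j')) * exp (eta p g * (ln (INR (S j' + t)) - ln (INR (S j')))))).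
      * apply Rmult_le_compat_l; [lra|exact IH].
      * assert (0 <= BB p g * (1 + eta p g / INR (S j'))).
        { pose proof BB_pos. apply Rmult_le_pos; [lra|].
          assert (0 <= eta p g / INR (S j')) by (unfold Rdiv; apply Rmult_le_pos; [lra|left; apply Rinv_0_lt_compat; lra]). lra. }
        rewrite (S_INR (S j' + t)).
        replace ((1 + eta p g / (INR (S j' + t) + 1)) *
          (BB p g * (1 + eta p g / INR (S j')) * exp (eta p g * (ln (INR (S j' + t)) - ln (INR (S j'))))))
          with (BB p g * (1 + eta p g / INR (S j')) * ((1 + eta p g / (INR (S j' + t) + 1)) *
           exp (eta p g * (ln (INR (S j' + t)) - ln (INR (S j')))))) by ring.
        apply Rmult_le_compat_l; [lra|]. apply grow; [|lra].
        replace 1 with (INR 1) by reflexivity. apply le_INR; lia.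
Qed.

Lemma rp_le_phi N : rpow (INR N) g <= phi p g N.
Proof.
  unfold rpow. destruct (Rle_dec (INR N) 0) as [H|H].
  - left; apply phi_pos.
  - unfold phi. apply Rle_Rpower_l; [lra|]. pose proof aa_pos. lra.
Qed.

Lemma Gh_mono K d h h' j : Inv K d -> (forall N, h N <= h' N) -> Gh h j d <= Gh h' j d.
Proof.
  intros HI Hh. unfold Gh. apply fold_le. intros [w s] Hin.
  destruct (HI _ Hin) as [Hw _]. simpl in *. apply Rmult_le_compat_l; auto.
Qed.

Lemma Rpower_div_exp n j e : 0 < n -> 0 < j -> Rpower (n / j) e = exp (e * (ln n - ln j)).
Proof.
  intros Hn Hj. unfold Rpower. replace (ln (n / j)) with (ln n - ln j); [reflexivity|].
  unfold Rdiv. rewrite ln_mult, ln_Rinv; auto. apply Rinv_0_lt_compat; auto.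
Qed.

Lemma main_bound j n : (1 <= j)%nat -> (j <= n)%nat ->
  expect_Npow p n j g <= 2 * BB p g * Rpower (INR n / INR j) (eta p g).
Proof.
  intros Hj Hn. destruct j as [|j']; [lia|].
  pose proof eta_bounds as He. pose proof BB_pos as HB.
  assert (Hjp : 0 < INR (S j')) by (apply lt_0_INR; lia).
  assert (Hnp : 0 < INR n) by (apply lt_0_INR; lia).
  rewrite Rpower_div_exp by lra.
  assert (Hsl : forall m, simon_law p (S m) = law m).
  { intros m. unfold simon_law, law. replace (S m - 1)%nat with m by lia. reflexivity. }
  assert (HE : forall m, expect_Npow p (S m) (S j') g <= Gh (phi p g) (S j') (law m)).
  { intros m. unfold expect_Npow. rewrite Hsl.
    change (Gh (fun N => rpow (INR N) g) (S j') (law m) <= Gh (phi p g) (S j') (law m)).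
    apply Gh_mono with (S m); [apply law_inv| apply rp_le_phi]. }
  destruct (Nat.eq_dec n (S j')) as [->|Hne].
  - eapply Rle_trans; [apply HE|]. rewrite Rminus_diag, Rmult_0_r, exp_0.
    eapply Rle_trans; [apply below; lia|]. lra.
  - destruct n as [|n']; [lia|].
    replace n' with (S j' + (n' - S j'))%nat by lia.
    eapply Rle_trans; [apply HE|]. eapply Rle_trans; [apply chain|].
    set (t := (n' - S j')%nat).
    assert (0 <= eta p g / INR (S j')) by (unfold Rdiv; apply Rmult_le_pos; [lra|left; apply Rinv_0_lt_compat; lra]).
    assert (eta p g / INR (S j') <= 1).
    { unfold Rdiv. apply Rmult_le_reg_r with (INR (S j')); auto.
      rewrite Rmult_assoc, Rinv_l, Rmult_1_r by lra. rewrite S_INR. pose proof (pos_INR j'). lra. }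
    assert (exp (eta p g * (ln (INR (S j' + t)) - ln (INR (S j')))) <=
            exp (eta p g * (ln (INR (S (S j' + t))) - ln (INR (S j'))))).
    { apply exp_le'. apply Rmult_le_compat_l; [lra|].
      assert (ln (INR (S j' + t)) <= ln (INR (S (S j' + t)))).
      { apply ln_le'. apply lt_0_INR; lia. apply le_INR; lia. }
      lra. }
    assert (0 < exp (eta p g * (ln (INR (S j' + t)) - ln (INR (S j'))))) by apply exp_pos.
    apply Rmult_le_compat; [apply Rmult_le_pos; lra | lra | | assumption].
    rewrite (Rmult_comm 2). apply Rmult_le_compat_l; lra.
Qed.

End S.

Theorem lemma5 (p gamma : R) (hp : 0 < p < 1) (hg : 1 < gamma < 1 / p) :
  exists c eta : R, 0 < c /\ 0 < eta < 1 /\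
    forall j n : nat, (1 <= j)%nat -> (j <= n)%nat ->
      expect_Npow p n j gamma <= c * Rpower (INR n / INR j) eta.
Proof.
  assert (hpg : p * gamma < 1).
  { destruct hg as [_ H]. apply Rmult_lt_compat_l with (r := p) in H; [|lra].
    unfold Rdiv in H. rewrite Rmult_1_l, Rinv_r in H by lra. exact H. }
  assert (hg1 : 1 < gamma) by lra.
  exists (2 * BB p gamma), (eta p gamma). split.
  - pose proof (BB_pos p gamma). lra.
  - split; [apply eta_bounds; auto|].
    intros j n Hj Hn. apply main_bound; auto.
Qed.
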